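(* Let $M$ be a proper $(4,4)$-map with only finitely many non-flat faces and vertices. Then the $1$-skeleton of $M$ (with its path metric) is quasi-isometric to the $1$-skeleton of a proper planar map in which every face has degree $4$ and only finitely many vertices are non-flat (have degree different from $4$).
   Context: A proper map is a tessellation of $\mathbb R^2$ by a 2-complex whose support is the whole plane and such that every disc meets only finitely many cells. Degree of a face: length of its boundary path; degree of a vertex: number of oriented edges starting there. It is a $(4,4)$-map if every face and every vertex has degree $\ge4$; a face or vertex is flat if its degree is exactly $4$, non-flat otherwise. Two metric spaces are quasi-isometric if there is a map $\phi$ between them with image coarsely dense and $-K+\frac1Ld(x,y)<d(\phi x,\phi y)<K+Ld(x,y)$ for some constants $L>1,K>0$. *)

(* Defs.v *)
From Stdlib Require Import Reals List Arith Relations.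
Import ListNotations.
Open Scope R_scope.

(* A combinatorial map: darts (oriented edges), an edge-reversal involution
   [alpha] without fixed points, and a bijection [sigma] giving the cyclic
   order of the darts starting at a common vertex.  Vertices are the
   sigma-orbits, faces are the orbits of [phi := sigma \o alpha]. *)
Record cmap := CMap {
  dart : Type;
  alpha : dart -> dart;
  sigma : dart -> dart;
  sigma_inv : dart -> dart;
  alpha_invol : forall d, alpha (alpha d) = d;
  alpha_nofix : forall d, alpha d <> d;
  sigma_K : forall d, sigma_inv (sigma d) = d;
  sigma_invK : forall d, sigma (sigma_inv d) = d
}.

Arguments alpha {c} d.
Arguments sigma {c} d.

Section CMapDefs.
Variable M : cmap.

Definition phi (d : dart M) : dart M := sigma (alpha d).

Definition same_vertex (d e : dart M) : Prop :=
  exists k, Nat.iter k (@sigma M) d = e.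

Definition same_face (d e : dart M) : Prop :=
  exists k, Nat.iter k phi d = e.

Definition orbit_size (f : dart M -> dart M) (d : dart M) (n : nat) : Prop :=
  (0 < n)%nat /\ Nat.iter n f d = d /\
  forall k, (0 < k < n)%nat -> Nat.iter k f d <> d.

Definition vdeg (d : dart M) (n : nat) : Prop := orbit_size (@sigma M) d n.
Definition fdeg (d : dart M) (n : nat) : Prop := orbit_size phi d n.

(* [walk x w y]: w is an edge path in the 1-skeleton from the vertex of the
   dart x to the vertex of the dart y *)
Fixpoint walk (x : dart M) (w : list (dart M)) (y : dart M) : Prop :=
  match w with
  | [] => same_vertex x y
  | d :: w' => same_vertex x d /\ walk (alpha d) w' y
  end.

Definition closed_walk (w : list (dart M)) : Prop := exists x, walk x w x.

Fixpoint face_path (d : dart M) (n : nat) : list (dart M) :=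
  match n with
  | O => []
  | S n' => d :: face_path (phi d) n'
  end.

Inductive hstep : list (dart M) -> list (dart M) -> Prop :=
  | hstep_back : forall w1 w2 d,
      closed_walk (w1 ++ [d; alpha d] ++ w2) -> closed_walk (w1 ++ w2) ->
      hstep (w1 ++ [d; alpha d] ++ w2) (w1 ++ w2)
  | hstep_face : forall w1 w2 d n,
      fdeg d n ->
      closed_walk (w1 ++ face_path d n ++ w2) -> closed_walk (w1 ++ w2) ->
      hstep (w1 ++ face_path d n ++ w2) (w1 ++ w2).

Definition simply_connected : Prop :=
  forall w, closed_walk w -> clos_refl_sym_trans _ hstep w [].

Definition connected : Prop := forall x y, exists w, walk x w y.

Definition infinite_darts : Prop := forall l : list (dart M), exists d, ~ In d l.

Definition proper_planar_map : Prop :=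
  (forall d, exists n, vdeg d n) /\
  (forall d, exists n, fdeg d n) /\
  connected /\ infinite_darts /\ simply_connected.

Definition map44 : Prop :=
  (forall d n, vdeg d n -> (4 <= n)%nat) /\
  (forall d n, fdeg d n -> (4 <= n)%nat).

Definition fin_nonflat_vertices : Prop :=
  exists l : list (dart M), forall d n, vdeg d n -> n <> 4%nat ->
    exists e, In e l /\ same_vertex e d.
Definition fin_nonflat_faces : Prop :=
  exists l : list (dart M), forall d n, fdeg d n -> n <> 4%nat ->
    exists e, In e l /\ same_face e d.

Definition all_faces_deg4 : Prop := forall d n, fdeg d n -> n = 4%nat.

Definition dist (x y : dart M) (n : nat) : Prop :=
  (exists w, walk x w y /\ length w = n) /\
  forall w, walk x w y -> (n <= length w)%nat.

End CMapDefs.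

Definition quasi_isometric (M N : cmap) : Prop :=
  exists (f : dart M -> dart N) (L K : R), 1 < L /\ 0 < K /\
    (forall x y, same_vertex M x y -> same_vertex N (f x) (f y)) /\
    (forall x y n m, dist M x y n -> dist N (f x) (f y) m ->
       - K + INR n / L < INR m /\ INR m < K + L * INR n) /\
    (exists C : R, forall y, exists x n, dist N (f x) y n /\ INR n <= C).

(* Main.v *)
Require Import Defs.
From Stdlib Require Import Reals List Arith Relations Lia Lra Psatz Classical.
Import ListNotations.
Open Scope nat_scope.

Lemma iter_mul {A} (f:A->A) p m x : Nat.iter p f x = x -> Nat.iter (p*m) f x = x.
Proof. intro H. induction m. rewrite Nat.mul_0_r; reflexivity.
  rewrite Nat.mul_succ_r, Nat.add_comm, Nat.iter_add, IHm; exact H. Qed.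

Lemma iter_mod {A} (f:A->A) p j x : 0 < p -> Nat.iter p f x = x ->
  Nat.iter j f x = Nat.iter (j mod p) f x.
Proof. intros Hp H.
  transitivity (Nat.iter (j mod p + p*(j/p)) f x).
  - f_equal. pose proof (Nat.div_mod j p). lia.
  - rewrite Nat.iter_add, iter_mul; auto. Qed.

Lemma iter_back {A} (f:A->A) p k x y : 0 < p -> Nat.iter p f x = x ->
  Nat.iter k f x = y -> Nat.iter ((p-1)*k) f y = x.
Proof. intros Hp H Hy. subst y. rewrite <- Nat.iter_add.
  replace ((p-1)*k + k) with (p*k) by (destruct p; [lia| simpl; rewrite Nat.sub_0_r; lia]).
  apply iter_mul; auto. Qed.

Lemma iter_cancel {A} (f g : A->A) (H: forall y, g (f y) = y) k x :
  Nat.iter k g (Nat.iter k f x) = x.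
Proof. induction k; [reflexivity|]. rewrite (Nat.iter_succ_r k A g), Nat.iter_succ, H. exact IHk. Qed.

Lemma iter_comm {A} (f:A->A) a b x : Nat.iter a f (Nat.iter b f x) = Nat.iter b f (Nat.iter a f x).
Proof. rewrite <- !Nat.iter_add, Nat.add_comm; reflexivity. Qed.

Lemma least_period {A} (f:A->A) x p : 0 < p -> Nat.iter p f x = x ->
  exists n, 0 < n /\ Nat.iter n f x = x /\ forall k, 0 < k < n -> Nat.iter k f x <> x.
Proof.
  revert p. induction p as [p IH] using (well_founded_induction lt_wf). intros Hp H.
  destruct (classic (exists k, 0 < k < p /\ Nat.iter k f x = x)) as [[k [Hk Hk']]|Hn].
  - apply (IH k); lia || auto.
  - exists p; repeat split; auto. intros k Hk E. apply Hn; eauto.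
Qed.

Section Gen.
Variable M : cmap.
Notation D := (dart M).

Lemma orbit_transfer {B} (f : D -> D) (g : B -> B) x y n :
  (forall k, Nat.iter k f x = x <-> Nat.iter k g y = y) ->
  (0 < n /\ Nat.iter n f x = x /\ forall k, 0 < k < n -> Nat.iter k f x <> x) ->
  (0 < n /\ Nat.iter n g y = y /\ forall k, 0 < k < n -> Nat.iter k g y <> y).
Proof. intros H [h1 [h2 h3]]. repeat split; auto. apply H; auto.
  intros k Hk E. apply (h3 k Hk). apply H; auto. Qed.

Lemma orbit_unique (f : D -> D) d n m : orbit_size M f d n -> orbit_size M f d m -> n = m.
Proof. intros [a1 [a2 a3]] [b1 [b2 b3]].
  destruct (lt_eq_lt_dec n m) as [[h|h]|h]; auto.
  - exfalso; apply (b3 n); auto.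
  - exfalso; apply (a3 m); auto. Qed.

Lemma sv_refl x : same_vertex M x x.
Proof. exists 0; reflexivity. Qed.
Lemma sv_trans x y z : same_vertex M x y -> same_vertex M y z -> same_vertex M x z.
Proof. intros [a Ha] [b Hb]. exists (b + a). rewrite Nat.iter_add, Ha; exact Hb. Qed.
Lemma sv_sigma x : same_vertex M x (Defs.sigma x).
Proof. exists 1; reflexivity. Qed.

Hypothesis vfin : forall d, exists n, vdeg M d n.

Lemma sv_sym x y : same_vertex M x y -> same_vertex M y x.
Proof. intros [k Hk]. destruct (vfin x) as [n [h1 [h2 _]]].
  exists ((n-1)*k). apply iter_back; auto. Qed.

Lemma walk_start x x' w y : walk M x w y -> same_vertex M x' x -> walk M x' w y.
Proof. destruct w; simpl.
  - intros; eapply sv_trans; eauto.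
  - intros [h1 h2] h; split; auto; eapply sv_trans; eauto. Qed.

Lemma walk_end x w y y' : walk M x w y -> same_vertex M y y' -> walk M x w y'.
Proof. revert x. induction w; simpl.
  - intros; eapply sv_trans; eauto.
  - intros x [h1 h2] h; split; auto. Qed.

Lemma walk_app x u y v z : walk M x u y -> walk M y v z -> walk M x (u ++ v) z.
Proof. revert x. induction u; simpl.
  - intros x h1 h2. eapply walk_start; eauto.
  - intros x [h1 h2] h; split; eauto. Qed.

Lemma walk_split x u v z : walk M x (u ++ v) z -> exists y, walk M x u y /\ walk M y v z.
Proof. revert x. induction u; simpl.
  - intros x h. exists x; split; auto. apply sv_refl.
  - intros x [h1 h2]. destruct (IHu _ h2) as [y [ha hb]]. exists y; split; auto. Qed.

Lemma walk_fp x d k y : same_vertex M x d ->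
  same_vertex M (alpha (Nat.iter k (phi M) d)) y -> walk M x (face_path M d (S k)) y.
Proof. revert x d. induction k; simpl; intros x d h1 h2.
  - split; auto.
  - split; auto. apply IHk. apply sv_sigma.
    rewrite <- Nat.iter_succ_r. exact h2. Qed.

Lemma walk_fp_inv x d k y : walk M x (face_path M d (S k)) y ->
  same_vertex M x d /\ same_vertex M (alpha (Nat.iter k (phi M) d)) y.
Proof. revert x d. induction k; intros x d; simpl face_path; simpl walk.
  - intros [h1 h2]; split; auto.
  - intros [h1 h2]. split; auto. apply IHk in h2. rewrite Nat.iter_succ_r. apply h2. Qed.

Lemma fp_loop d n x y : fdeg M d n -> same_vertex M x d -> same_vertex M d y ->
  walk M x (face_path M d n) y.
Proof. intros [h1 [h2 _]] hx hy. destruct n as [|k]; [lia|].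
  apply walk_fp; auto. eapply sv_trans; [|exact hy].
  exists 1. change (phi M (Nat.iter k (phi M) d) = d). rewrite <- Nat.iter_succ. exact h2. Qed.

Lemma fp_end x d n y : fdeg M d n -> walk M x (face_path M d n) y -> same_vertex M d y.
Proof. intros [h1 [h2 _]] hw. destruct n as [|k]; [lia|].
  apply walk_fp_inv in hw as [_ hw]. eapply sv_trans; [|exact hw].
  apply sv_sym. exists 1. change (phi M (Nat.iter k (phi M) d) = d). rewrite <- Nat.iter_succ. exact h2. Qed.

Inductive elem : list D -> list D -> Prop :=
| el_back w1 w2 d : elem (w1 ++ [d; alpha d] ++ w2) (w1 ++ w2)
| el_face w1 w2 d n : fdeg M d n -> elem (w1 ++ face_path M d n ++ w2) (w1 ++ w2).

Definition st p q u v := elem u v /\ walk M p u q /\ walk M p v q.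
Definition eqv p q := clos_refl_sym_trans _ (st p q).

Lemma eqv_rst p u v : eqv p p u v -> clos_refl_sym_trans _ (hstep M) u v.
Proof. induction 1.
  - destruct H as [h [hw1 hw2]]. apply rst_step. destruct h.
    + apply hstep_back; exists p; auto.
    + apply hstep_face; auto; exists p; auto.
  - apply rst_refl.
  - apply rst_sym; auto.
  - eapply rst_trans; eauto. Qed.

Lemma elem_ctx c c' u v : elem u v -> elem (c ++ u ++ c') (c ++ v ++ c').
Proof. destruct 1.
  - replace (c ++ (w1 ++ [d; alpha d] ++ w2) ++ c') with ((c ++ w1) ++ [d; alpha d] ++ (w2 ++ c'))
      by (rewrite <- !app_assoc; reflexivity).
    replace (c ++ (w1 ++ w2) ++ c') with ((c ++ w1) ++ (w2 ++ c'))
      by (rewrite <- !app_assoc; reflexivity). constructor.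
  - replace (c ++ (w1 ++ face_path M d n ++ w2) ++ c') with ((c ++ w1) ++ face_path M d n ++ (w2 ++ c'))
      by (rewrite <- !app_assoc; reflexivity).
    replace (c ++ (w1 ++ w2) ++ c') with ((c ++ w1) ++ (w2 ++ c'))
      by (rewrite <- !app_assoc; reflexivity). constructor; auto. Qed.

Lemma eqv_ctx p q r s c c' u v : eqv q r u v -> walk M p c q -> walk M r c' s ->
  eqv p s (c ++ u ++ c') (c ++ v ++ c').
Proof. intros H hc hc'. induction H.
  - destruct H as [h [hw1 hw2]]. apply rst_step. split; [apply elem_ctx; auto|].
    split; eapply walk_app; eauto; eapply walk_app; eauto.
  - apply rst_refl.
  - apply rst_sym; auto.
  - eapply rst_trans; eauto. Qed.

Inductive bred : list D -> list D -> Prop :=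
| br w1 w2 d : bred (w1 ++ [d; alpha d] ++ w2) (w1 ++ w2).

Lemma br' w1 w2 d e : e = alpha d -> bred (w1 ++ d :: e :: w2) (w1 ++ w2).
Proof. intros ->. apply (br w1 w2 d). Qed.

Lemma bred_walk p q u v : bred u v -> walk M p u q -> walk M p v q.
Proof. destruct 1. intros h. apply walk_split in h as [y [h1 h2]].
  simpl in h2. destruct h2 as [a [b c]]. rewrite alpha_invol in c.
  eapply walk_app; eauto. eapply walk_start; eauto. Qed.

Lemma breds_eqv p q u v : clos_refl_trans _ bred u v -> walk M p u q -> eqv p q u v.
Proof. intros H. apply clos_rt_rt1n in H. induction H; intros h.
  - apply rst_refl.
  - eapply rst_trans; [|apply IHclos_refl_trans_1n; eapply bred_walk; eauto].
    apply rst_step. split; [destruct H; constructor|]. split; auto. eapply bred_walk; eauto. Qed.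

Lemma breds_ctx c c' u v : clos_refl_trans _ bred u v ->
  clos_refl_trans _ bred (c ++ u ++ c') (c ++ v ++ c').
Proof. induction 1.
  - destruct H. apply rt_step.
    replace (c ++ (w1 ++ [d; alpha d] ++ w2) ++ c') with ((c ++ w1) ++ [d; alpha d] ++ (w2 ++ c'))
      by (rewrite <- !app_assoc; reflexivity).
    replace (c ++ (w1 ++ w2) ++ c') with ((c ++ w1) ++ (w2 ++ c'))
      by (rewrite <- !app_assoc; reflexivity). constructor.
  - apply rt_refl.
  - eapply rt_trans; eauto. Qed.

Definition inv (u : list D) : list D := rev (map (fun d => alpha d) u).

Lemma inv_cancel u : clos_refl_trans _ bred (u ++ inv u) [].
Proof. induction u as [|d u IH]; simpl. apply rt_refl.
  unfold inv; simpl. 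
  apply rt_trans with ([d] ++ [] ++ [alpha d]).
  - replace (d :: u ++ rev (map (fun d => alpha d) u) ++ [alpha d])
      with ([d] ++ (u ++ inv u) ++ [alpha d]) by (unfold inv; simpl; rewrite <- !app_assoc; reflexivity).
    apply breds_ctx; auto.
  - apply rt_step. apply (br' [] [] d (alpha d)); auto. Qed.

Lemma inv_inv u : inv (inv u) = u.
Proof. unfold inv. rewrite map_rev, rev_involutive, map_map.
  induction u; simpl; auto. rewrite alpha_invol, IHu; auto. Qed.

Lemma elem_len u v : elem u v -> length v < length u.
Proof. destruct 1; rewrite !length_app; simpl.
  - lia.
  - destruct H as [h _]. destruct n; [lia|]. simpl. lia. Qed.

Lemma hstep_elem a b : hstep M a b -> elem a b.
Proof. destruct 1; constructor; auto. Qed.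
Lemma loop_base v S w2 z : (exists d, S = [d; alpha d]) \/ (exists d n, fdeg M d n /\ S = face_path M d n) ->
  walk M v (S ++ w2) z -> exists y, walk M y w2 z /\ same_vertex M v y /\ 
    (forall e, hd_error S = Some e -> same_vertex M e y /\ same_vertex M v e).
Proof. intros hS h. apply walk_split in h as [y [h1 h2]]. exists y. split; auto.
  destruct hS as [[d ->]|[d [n [hf ->]]]].
  - simpl in h1. destruct h1 as [a [b c]]. rewrite alpha_invol in c.
    split; [eapply sv_trans; eauto|]. intros e [=<-]; auto.
  - pose proof (fp_end _ _ _ _ hf h1) as he.
    destruct hf as [n0 _]. destruct n as [|n]; [lia|]. simpl in h1. destruct h1 as [a _].
    split; [eapply sv_trans; eauto|]. intros e [=<-]; auto. Qed.

Lemma closed_first x d w v : walk M x (d :: w) x -> same_vertex M v d -> walk M v (d :: w) v.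
Proof. intros h hv. pose proof h as [hx _].
  eapply walk_start; [eapply walk_end; eauto|].
  - eapply sv_trans; [exact hx|apply sv_sym; auto].
  - eapply sv_trans; [exact hv|apply sv_sym; auto]. Qed.

Lemma hstep_base a b v : hstep M a b -> b <> [] ->
  (walk M v a v -> walk M v b v) /\ (walk M v b v -> walk M v a v).
Proof. intros H hb. 
  assert (G: exists w1 w2 S, a = w1 ++ S ++ w2 /\ b = w1 ++ w2 /\ closed_walk M a /\ closed_walk M b /\
     ((exists d, S = [d; alpha d]) \/ (exists d n, fdeg M d n /\ S = face_path M d n))
     /\ S <> []).
  { destruct H. - exists w1, w2, [d; alpha d]; repeat split; eauto. discriminate.
    - exists w1, w2, (face_path M d n); repeat split; eauto 10.
      destruct H as [h _]; destruct n; [lia|]; discriminate. }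
  clear H. destruct G as [w1 [w2 [S [-> [-> [[xa ha] [[xb hb'] [hS hSn]]]]]]]].
  destruct w1 as [|e w1].
  - simpl in *. destruct w2 as [|e w2]; [congruence|]. split.
    + intros h. destruct (loop_base _ _ _ _ hS h) as [y [h1 [h2 _]]].
      eapply closed_first; eauto. destruct h1 as [h1 _]. eapply sv_trans; eauto.
    + intros h. destruct S as [|s S]; [congruence|].
      destruct (loop_base _ _ _ _ hS ha) as [y [h1 [h2 h3]]].
      destruct (h3 s eq_refl) as [h4 h5].
      eapply closed_first; eauto. destruct h as [h _]. destruct h1 as [h1 _].
      eapply sv_trans; [exact h|]. apply sv_sym. eapply sv_trans; [exact h4|]. exact h1.
  - simpl. split; intros h; eapply closed_first; eauto; apply h. Qed.

Lemma rst_based u v : clos_refl_sym_trans _ (hstep M) u [] -> walk M v u v -> eqv v v u [].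
Proof. intros H. apply clos_rst_rst1n in H. remember [] as z.
  induction H; intros hw.
  - subst; apply rst_refl.
  - destruct x as [|a x]. { subst; apply rst_refl. }
    destruct y as [|b y].
    + destruct H as [H|H].
      * subst z. apply rst_step. unfold st. split; [apply hstep_elem; auto|]. split; auto. apply sv_refl.
      * exfalso. assert (elem [] (a :: x)) as E by (apply hstep_elem; auto).
        apply elem_len in E. simpl in E. lia.
    + assert (hy : walk M v (b :: y) v).
      { destruct H as [H|H].
        - apply (proj1 (hstep_base _ _ v H ltac:(discriminate))); auto.
        - apply (proj2 (hstep_base _ _ v H ltac:(discriminate))); auto. }
      eapply rst_trans; [|apply IHclos_refl_sym_trans_1n; auto].
      destruct H as [H|H].
      * apply rst_step. unfold st. split; [apply hstep_elem; auto|]. auto.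
      * apply rst_sym, rst_step. unfold st. split; [apply hstep_elem; auto|]. auto.
Qed.

End Gen.
Section Quad.
Variable M : cmap.
Notation D := (dart M).
Notation sg := (@Defs.sigma M).
Notation sgi := (sigma_inv M).
Notation al := (@alpha M).

Definition alphaN (p : D * bool) : D * bool := let (e, b) := p in (e, negb b).
Definition sigmaN (p : D * bool) : D * bool :=
  let (e, b) := p in if b then (sg e, true) else (sgi (al e), false).
Definition sigma_invN (p : D * bool) : D * bool :=
  let (e, b) := p in if b then (sgi e, true) else (al (sg e), false).

Lemma alphaN_invol p : alphaN (alphaN p) = p.
Proof. destruct p as [e b]; simpl; rewrite Bool.negb_involutive; auto. Qed.
Lemma alphaN_nofix p : alphaN p <> p.
Proof. destruct p as [e b]; simpl; intros H; injection H; destruct b; discriminate. Qed.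
Lemma sigmaN_K p : sigma_invN (sigmaN p) = p.
Proof. destruct p as [e [|]]; simpl.
  - rewrite sigma_K; auto.
  - rewrite sigma_invK, alpha_invol; auto. Qed.
Lemma sigmaN_invK p : sigmaN (sigma_invN p) = p.
Proof. destruct p as [e [|]]; simpl.
  - rewrite sigma_invK; auto.
  - rewrite alpha_invol, sigma_K; auto. Qed.

Definition NM : cmap := CMap (D * bool) alphaN sigmaN sigma_invN
  alphaN_invol alphaN_nofix sigmaN_K sigmaN_invK.

Definition tau (e : D) : D := sgi (al e).
Definition gam (e : D) : D := al (sg e).

Lemma iterN_t k e : Nat.iter k (@Defs.sigma NM) (e, true) = (Nat.iter k sg e, true).
Proof. induction k; [reflexivity|]. rewrite !Nat.iter_succ, IHk. reflexivity. Qed.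
Lemma iterN_f k e : Nat.iter k (@Defs.sigma NM) (e, false) = (Nat.iter k tau e, false).
Proof. induction k; [reflexivity|]. rewrite !Nat.iter_succ, IHk. reflexivity. Qed.

Lemma svN_tt x y : same_vertex NM (x, true) (y, true) <-> same_vertex M x y.
Proof. split; intros [k Hk]; exists k.
  - rewrite iterN_t in Hk. congruence.
  - rewrite iterN_t. congruence. Qed.
Lemma svN_ff x y : same_vertex NM (x, false) (y, false) <-> exists k, Nat.iter k tau x = y.
Proof. split; intros [k Hk]; exists k.
  - rewrite iterN_f in Hk. congruence.
  - rewrite iterN_f. congruence. Qed.
Lemma svN_b x b p : same_vertex NM (x, b) p -> snd p = b.
Proof. intros [k Hk]. destruct b; [rewrite iterN_t in Hk|rewrite iterN_f in Hk]; subst; auto. Qed.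

Lemma tau_gam y : tau (gam y) = y.
Proof. unfold tau, gam. rewrite alpha_invol, sigma_K; auto. Qed.
Lemma gam_tau y : gam (tau y) = y.
Proof. unfold tau, gam. rewrite sigma_invK, alpha_invol; auto. Qed.
Lemma iter_gam k x : Nat.iter k gam x = al (Nat.iter k (phi M) (al x)).
Proof. induction k; simpl. rewrite alpha_invol; auto. rewrite IHk. reflexivity. Qed.

Lemma tau_period k e : Nat.iter k tau e = e <-> Nat.iter k (phi M) (al e) = al e.
Proof. split; intro H.
  - assert (Nat.iter k gam e = e) as G.
    { rewrite <- H at 1. apply iter_cancel. apply gam_tau. }
    rewrite iter_gam in G. rewrite <- G at 2. rewrite alpha_invol. auto.
  - assert (Nat.iter k gam e = e) as G.
    { rewrite iter_gam, H, alpha_invol; auto. }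
    rewrite <- G at 1. apply iter_cancel. apply tau_gam. Qed.

Lemma phiN_t e : phi NM (e, true) = (tau e, false).
Proof. reflexivity. Qed.
Lemma phiN_f e : phi NM (e, false) = (sg e, true).
Proof. reflexivity. Qed.

Lemma fdegN p : fdeg NM p 4.
Proof. unfold fdeg, orbit_size. destruct p as [e [|]]; split; try lia; split.
  - simpl. unfold tau. rewrite !sigma_invK, !alpha_invol. auto.
  - intros k Hk. destruct k as [|[|[|[|k]]]]; try lia; simpl; try discriminate.
    unfold tau. rewrite sigma_invK. intros H. injection H. apply alpha_nofix.
  - simpl. unfold tau. rewrite !sigma_invK, !alpha_invol, sigma_K. auto.
  - intros k Hk. destruct k as [|[|[|[|k]]]]; try lia; simpl; try discriminate.
    unfold tau. intros H. injection H. intros H'. apply (alpha_nofix M (sg e)).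
    rewrite <- H' at 2. rewrite sigma_invK. auto. Qed.


Hypothesis HvM : forall d, exists n, vdeg M d n.
Hypothesis HfM : forall d, exists n, fdeg M d n.

Lemma pair_eq (a c : D) (b : bool) : (a, b) = (c, b) <-> a = c.
Proof. split; [intros H; injection H; auto| intros ->; auto]. Qed.

Lemma vdegN_t e n : vdeg M e n <-> vdeg NM (e, true) n.
Proof. split; apply orbit_transfer; intros k; rewrite iterN_t, pair_eq; tauto. Qed.

Lemma vdegN_f e n : fdeg M (al e) n <-> vdeg NM (e, false) n.
Proof. split; apply orbit_transfer; intros k; rewrite iterN_f, pair_eq, tau_period; tauto. Qed.

Lemma vfinN : forall p, exists n, vdeg NM p n.
Proof. intros [e [|]].
  - destruct (HvM e) as [n Hn]. exists n. apply vdegN_t; auto.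
  - destruct (HfM (al e)) as [n Hn]. exists n. apply vdegN_f; auto. Qed.

Fixpoint liftw (u : list D) : list (dart NM) :=
  match u with
  | [] => []
  | d :: u' => (sgi d, true) :: (al d, false) :: liftw u'
  end.

Lemma liftw_app u v : liftw (u ++ v) = liftw u ++ liftw v.
Proof. induction u; simpl; auto. rewrite IHu; auto. Qed.

Lemma lift_walk x u y : walk M x u y -> walk NM (x, true) (liftw u) (y, true).
Proof. revert x. induction u as [|d u IH]; simpl; intros x.
  - apply svN_tt.
  - intros [h1 h2]. split; [|split].
    + apply svN_tt. eapply sv_trans; [exact h1|]. apply sv_sym; auto.
      exists 1. simpl. apply sigma_invK.
    + apply (sv_sym NM vfinN). apply svN_ff. exists 1. simpl. unfold tau. rewrite alpha_invol; auto.
    + apply IH; auto. Qed.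

Lemma liftw_back d : liftw [d; al d] = inv NM (face_path NM (d, true) 4).
Proof. simpl. unfold inv, tau. simpl. rewrite !sigma_invK, !alpha_invol. reflexivity. Qed.

Lemma lift_fp d k : clos_refl_trans _ (bred NM) (liftw (face_path M d (S k)))
   [(sgi d, true); (al (Nat.iter k (phi M) d), false)].
Proof. revert d. induction k; intros d. { apply rt_refl. }
  replace (liftw (face_path M d (S (S k)))) with
    ([(sgi d, true); (al d, false)] ++ liftw (face_path M (phi M d) (S k)) ++ [])
    by (rewrite app_nil_r; reflexivity).
  eapply rt_trans. { apply breds_ctx. apply IHk. }
  unfold phi at 1. rewrite sigma_K. simpl.
  apply rt_step. rewrite <- Nat.iter_succ_r.
  apply (br' NM [(sgi d, true)] [(al (Nat.iter (S k) (phi M) d), false)] (al d, false)). reflexivity. Qed.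


Lemma lift_fp_full d n : fdeg M d n -> clos_refl_trans _ (bred NM) (liftw (face_path M d n)) [].
Proof. intros [h1 [h2 _]]. destruct n as [|k]; [lia|].
  eapply rt_trans; [apply lift_fp|]. apply rt_step.
  assert (E : al (Nat.iter k (phi M) d) = sgi d).
  { rewrite <- h2 at 2. rewrite Nat.iter_succ. unfold phi. rewrite sigma_K. auto. }
  rewrite E. apply (br' NM [] [] (sgi d, true)). reflexivity. Qed.

Lemma lift_st v a b : st M v v a b -> eqv NM (v, true) (v, true) (liftw a) (liftw b).
Proof. intros [he [ha hb]]. pose proof (lift_walk _ _ _ ha) as la.
  destruct he as [w1 w2 d|w1 w2 d n hf].
  - rewrite !liftw_app in *. rewrite liftw_back in *.
    set (F := face_path NM (d, true) 4) in *.
    set (p := (v, true)) in *.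
    apply walk_split in la as [z1 [l1 l2]].
    apply walk_split in l2 as [z2 [l2 l3]].
    assert (hz : same_vertex NM (d, true) z2).
    { unfold F in l2. rewrite <- liftw_back in l2. simpl in l2. rewrite alpha_invol in l2. tauto. }
    assert (hF : walk NM z2 F z2).
    { apply fp_loop; auto using fdegN. apply sv_sym; auto using vfinN. }
    assert (hB : walk NM p (liftw w1 ++ inv NM F ++ F ++ liftw w2) p).
    { eapply walk_app; eauto. eapply walk_app; eauto. eapply walk_app; eauto. }
    apply rst_trans with (liftw w1 ++ inv NM F ++ F ++ liftw w2).
    + apply rst_sym, rst_step. split; [|split; auto].
      * rewrite !app_assoc. rewrite <- (app_assoc _ F). apply el_face. apply fdegN.
      * eapply walk_app; eauto. eapply walk_app; eauto.
    + apply breds_eqv; auto. rewrite (app_assoc (inv NM F)).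
      replace (liftw w1 ++ liftw w2) with (liftw w1 ++ [] ++ liftw w2) by reflexivity.
      apply breds_ctx. rewrite <- (inv_inv NM F) at 2. apply inv_cancel.
  - rewrite !liftw_app in *. apply breds_eqv; auto.
    replace (liftw w1 ++ liftw w2) with (liftw w1 ++ [] ++ liftw w2) by reflexivity.
    apply breds_ctx. apply lift_fp_full; auto. Qed.

Lemma lift_eqv v a b : eqv M v v a b -> eqv NM (v, true) (v, true) (liftw a) (liftw b).
Proof. induction 1.
  - apply lift_st; auto.
  - apply rst_refl.
  - apply rst_sym; auto.
  - eapply rst_trans; eauto. Qed.


Lemma fp_length d n : length (face_path M d n) = n.
Proof. revert d; induction n; simpl; auto. Qed.

Hypothesis Hff : fin_nonflat_faces M.

Lemma Dbound : exists Dn, 1 <= Dn /\ forall x, exists p, 0 < p /\ p <= Dn /\ Nat.iter p (phi M) x = x.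
Proof. destruct Hff as [l Hl].
  assert (exists Dl, forall e, In e l -> exists p, 0 < p /\ p <= Dl /\ Nat.iter p (phi M) e = e) as [Dl HDl].
  { clear Hl. induction l as [|a l [Dl IH]].
    - exists 0. intros e [].
    - destruct (HfM a) as [n [n1 [n2 _]]]. exists (Dl + n). intros e [<-|He].
      + exists n; repeat split; auto; lia.
      + destruct (IH e He) as [p [p1 [p2 p3]]]. exists p; repeat split; auto; lia. }
  exists (Dl + 4). split; [lia|]. intros x.
  destruct (HfM x) as [n Hn]. destruct (Nat.eq_dec n 4) as [->|Hn4].
  - destruct Hn as [n1 [n2 _]]. exists 4; repeat split; auto; lia.
  - destruct (Hl x n Hn Hn4) as [e [He [j Hj]]].
    destruct (HDl e He) as [p [p1 [p2 p3]]]. exists p; repeat split; auto; try lia.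
    subst x. rewrite iter_comm, p3. auto. Qed.

Variable Dn : nat.
Hypothesis HDn1 : 1 <= Dn.
Hypothesis HDn : forall x, exists p, 0 < p /\ p <= Dn /\ Nat.iter p (phi M) x = x.

Lemma arc e g j : Nat.iter j tau e = g ->
  exists k, Nat.iter k (phi M) (sg e) = al g /\ k < Dn * Dn.
Proof. intros Hj.
  destruct (HDn (al e)) as [p1 [p11 [p12 p13]]].
  apply tau_period in p13.
  rewrite (iter_mod _ p1 j e p11 p13) in Hj.
  set (j' := j mod p1) in *.
  assert (hj' : j' < p1) by (apply Nat.mod_upper_bound; lia).
  assert (G : Nat.iter j' gam g = e) by (subst g; apply iter_cancel; apply gam_tau).
  rewrite iter_gam in G.
  assert (G2 : Nat.iter (S j') (phi M) (al g) = sg e).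
  { rewrite Nat.iter_succ, <- G. reflexivity. }
  destruct (HDn (al g)) as [p2 [p21 [p22 p23]]].
  exists ((p2 - 1) * S j'). split.
  - apply iter_back; auto.
  - destruct p2; [lia|]. simpl. rewrite Nat.sub_0_r. nia. Qed.

Lemma proj_walk n : forall w x y, length w <= n -> walk NM (x, true) w (y, true) ->
  exists u, walk M x u y /\ (length u <= Dn * Dn * length w)%nat /\ eqv NM (x, true) (y, true) w (liftw u).
Proof. induction n as [|n IH]; intros w x y hl hw.
  - destruct w; [|simpl in hl; lia]. exists []. simpl in *. split; [apply svN_tt; auto|].
    split; [lia|]. apply rst_refl.
  - destruct w as [|[e b] w].
    { exists []. simpl in *. split; [apply svN_tt; auto|]. split; [lia|]. apply rst_refl. }
    simpl in hw. destruct hw as [h1 h2].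
    pose proof (svN_b _ _ _ h1) as hb; simpl in hb; subst b.
    destruct w as [|[g b'] w].
    { simpl in h2. apply svN_b in h2. simpl in h2. discriminate. }
    simpl in h2. destruct h2 as [h2 h3].
    pose proof (svN_b _ _ _ h2) as hb; simpl in hb; subst b'.
    apply svN_ff in h2 as [j hj].
    assert (hl' : length w <= n) by (simpl in hl; change (@length (D * bool) w <= n); lia).
    destruct (IH w g y hl' h3) as [u [hu1 [hu2 hu3]]].
    destruct (arc e g j hj) as [k [hk1 hk2]].
    set (A := face_path M (sg e) (S k)).
    assert (hA : walk M x A g).
    { apply walk_fp. eapply sv_trans; [apply svN_tt; exact h1|apply sv_sigma].
      rewrite hk1, alpha_invol. apply sv_refl. }
    exists (A ++ u). split; [eapply walk_app; eauto|]. split.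
    { rewrite length_app. unfold A. rewrite fp_length. simpl length.
      assert (E : @length (dart NM) w = @length (D * bool) w) by reflexivity.
      rewrite <- ?E in *. nia. }
    rewrite liftw_app.
    assert (hp : walk NM (x, true) [(e, true); (g, false)] (g, true)).
    { simpl. repeat split; auto. apply svN_ff. exists j; auto. apply sv_refl. }
    apply rst_trans with ([(e, true); (g, false)] ++ liftw u).
    + change ((e, true) :: (g, false) :: w) with ([(e, true); (g, false)] ++ w).
      pose proof (eqv_ctx NM (x, true) (g, true) (y, true) (y, true) [(e, true); (g, false)] [] _ _
        hu3 hp (sv_refl _ _)) as E.
      rewrite !app_nil_r in E. exact E.
    + change (eqv NM (x,true) (y,true) ([] ++ [(e, true); (g, false)] ++ liftw u) ([] ++ liftw A ++ liftw u)).
      apply (eqv_ctx NM (x, true) (x, true) (g, true) (y, true) [] (liftw u)).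
      * apply rst_sym. apply breds_eqv.
        -- pose proof (lift_fp (sg e) k) as L. rewrite sigma_K, hk1, alpha_invol in L. exact L.
        -- apply lift_walk; auto.
      * apply sv_refl.
      * apply lift_walk; auto. Qed.


Hypothesis HscM : simply_connected M.

Lemma vertex_closed c X : walk NM (c, true) X (c, true) -> eqv NM (c, true) (c, true) X [].
Proof. intros hX.
  destruct (proj_walk (length X) X c c (le_n _) hX) as [u [hu1 [_ hu3]]].
  eapply rst_trans; [exact hu3|].
  apply (lift_eqv c u []). apply rst_based; auto. apply HscM. exists c; auto. Qed.

Lemma scN : simply_connected NM.
Proof. intros w [z hz]. destruct w as [|a w]. { apply rst_refl. }
  assert (hw : walk NM a (a :: w) a) by (eapply closed_first; eauto using vfinN; apply sv_refl).
  destruct a as [c [|]].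
  - apply (eqv_rst NM (c, true)). apply vertex_closed; auto.
  - set (y := (c, false)) in *.
    assert (hX : walk NM (c, true) (w ++ [y]) (c, true)).
    { destruct hw as [_ hw]. eapply walk_app; [exact hw|]. simpl. split; apply sv_refl. }
    apply (eqv_rst NM y).
    assert (hY : walk NM y ([y] ++ (w ++ [y]) ++ [(c, true)]) y).
    { eapply walk_app; [|eapply walk_app; [exact hX|]].
      - simpl. split; apply sv_refl.
      - simpl. split; apply sv_refl. }
    apply rst_trans with ([y] ++ (w ++ [y]) ++ [(c, true)]).
    + apply rst_sym. apply breds_eqv; auto. apply rt_step.
      replace ([y] ++ (w ++ [y]) ++ [(c, true)]) with ((y :: w) ++ y :: (c, true) :: [])
        by (simpl; rewrite <- app_assoc; reflexivity).
      pose proof (br' NM (y :: w) [] y (c, true) eq_refl) as Hb. rewrite app_nil_r in Hb. exact Hb.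
    + apply rst_trans with ([y] ++ [] ++ [(c, true)]).
      * apply (eqv_ctx NM y (c, true) (c, true) y).
        -- apply vertex_closed; auto.
        -- simpl; split; apply sv_refl.
        -- simpl; split; apply sv_refl.
      * apply breds_eqv. apply rt_step. apply (br' NM [] [] y). reflexivity.
        simpl; repeat split; apply sv_refl. Qed.

End Quad.

Lemma liftw_length M u : length (liftw M u) = 2 * length u.
Proof. induction u; [reflexivity|]. cbn [liftw length]. rewrite IHu. lia. Qed.

Lemma conN M : (forall d, exists n, vdeg M d n) -> (forall d, exists n, fdeg M d n) ->
  connected M -> connected (NM M).
Proof. intros HvM HfM Hcon [x b] [y b'].
  destruct (Hcon x y) as [u hu]. apply (lift_walk M HvM HfM) in hu.
  exists ((if b then [] else [(x, false)]) ++ liftw M u ++ (if b' then [] else [(y, true)])).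
  eapply walk_app; [|eapply walk_app; [exact hu|]].
  - destruct b; simpl; [apply sv_refl|split; apply sv_refl].
  - destruct b'; simpl; [apply sv_refl|split; apply sv_refl]. Qed.

Lemma infN M : infinite_darts M -> infinite_darts (NM M).
Proof. intros Hinf l. destruct (Hinf (map fst l)) as [d hd]. exists (d, true).
  intro H. apply hd. apply (in_map fst) in H. exact H. Qed.

Lemma nonflatN M : fin_nonflat_vertices M -> fin_nonflat_faces M -> fin_nonflat_vertices (NM M).
Proof. intros [lv Hlv] [lf Hlf].
  exists (map (fun e => (e, true)) lv ++ map (fun e => (alpha e, false)) lf).
  intros [d [|]] n H Hn.
  - apply vdegN_t in H. destruct (Hlv d n H Hn) as [e [He Hed]].
    exists (e, true). split; [apply in_or_app; left; apply (in_map (fun e => (e, true))); auto|].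
    apply svN_tt; auto.
  - pose proof H as H'. apply vdegN_f in H. destruct (Hlf _ n H Hn) as [e [He [k Hk]]].
    exists (alpha e, false). split; [apply in_or_app; right; apply (in_map (fun e => (alpha e, false))); auto|].
    apply svN_ff.
    assert (G : Nat.iter k (gam M) (alpha e) = d) by (rewrite iter_gam, alpha_invol, Hk, alpha_invol; auto).
    assert (G2 : Nat.iter k (tau M) d = alpha e) by (rewrite <- G; apply iter_cancel; apply tau_gam).
    destruct H' as [n1 [n2 _]]. rewrite iterN_f in n2. injection n2 as n2.
    exists ((n - 1) * k). apply iter_back; auto. Qed.

Theorem lemma3p3 (M : cmap) :
  proper_planar_map M -> map44 M ->
  fin_nonflat_vertices M -> fin_nonflat_faces M ->
  exists N : cmap,
    proper_planar_map N /\ all_faces_deg4 N /\ fin_nonflat_vertices N /\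
    quasi_isometric M N.
Proof.
  intros [HvM [HfM [Hcon [Hinf HscM]]]] _ Hnv Hff.
  destruct (Dbound M HfM Hff) as [Dn [HDn1 HDn]].
  exists (NM M). split; [|split; [|split]].
  - split; [apply vfinN; auto|]. split; [intros p; exists 4; apply fdegN|].
    split; [apply conN; auto|]. split; [apply infN; auto|].
    apply (scN M HvM HfM Dn HDn1 HDn HscM).
  - intros p n H. exact (orbit_unique _ _ _ _ _ H (fdegN M p)).
  - apply nonflatN; auto.
  - exists (fun d => (d, true) : dart (NM M)), (INR (Dn * Dn) + 2)%R, 1%R.
    pose proof (pos_INR (Dn * Dn)) as HB.
    split; [lra|]. split; [lra|]. split.
    { intros x y H. apply svN_tt; auto. }
    split.
    + intros x y n m [[u [hu hul]] hun] [[w [hw hwl]] hwm].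
      assert (h1 : m <= 2 * n).
      { pose proof (hwm (liftw M u) (lift_walk M HvM HfM _ _ _ hu)) as Hm.
        rewrite <- hul, <- liftw_length. exact Hm. }
      destruct (proj_walk M HvM HfM Dn HDn1 HDn (length w) w x y (le_n _) hw) as [u' [hu1 [hu2 _]]].
      assert (h2 : n <= Dn * Dn * m).
      { specialize (hun u' hu1). rewrite <- hwl. lia. }
      apply le_INR in h1, h2. rewrite mult_INR in h1, h2. simpl (INR 2) in h1.
      set (B := INR (Dn * Dn)) in *.
      pose proof (pos_INR n). pose proof (pos_INR m).
      assert (h3 : (INR n / (B + 2) <= INR m)%R).
      { unfold Rdiv. apply (Rmult_le_reg_r (B + 2)); [lra|].
        rewrite Rmult_assoc, Rinv_l, Rmult_1_r; [nra|lra]. }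
      split; nra.
    + exists 1%R. intros [e [|]].
      * exists e, 0. split; [|simpl; lra]. split.
        -- exists []. split; auto. apply sv_refl.
        -- intros; lia.
      * exists e, 1. split; [|simpl; lra]. split.
        -- exists [(e, true)]. split; auto. simpl. split; apply sv_refl.
        -- intros w hw. destruct w; [|simpl; lia].
           simpl in hw. apply svN_b in hw. discriminate.
Qed.
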